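(* For every index coding instance $\mathcal{I}=\{(i\mid A_i):i\in[m]\}$, the optimal value $\beta_{\text{FPCC}}(\mathcal{I})$ is attained by a family $(M_j,\gamma_j)_{j\in[n]}$ in which every $M_j$ is a minimal partial clique set; equivalently, restricting the FPCC optimization to families of minimal partial clique sets does not change its value.
   Context: $\beta_{\text{MDS}}(M)=|M|-\min_{i\in M}|M\cap A_i|$ for nonempty $M\subseteq[m]$. $\beta_{\text{FPCC}}(\mathcal{I})=\min\sum_{j\in[n]}\gamma_j\beta_{\text{MDS}}(M_j)$ over finite families of nonempty (possibly overlapping) subsets $M_1,\dots,M_n\subseteq[m]$ and weights $\gamma_j\in[0,1]$ with $\sum_{j:\,i\in M_j}\gamma_j\ge1$ for every $i\in[m]$. A nonempty set $M\subseteq[m]$ is a minimal partial clique set if for every partition of $M$ into nonempty disjoint subsets $M_1,\dots,M_n$ one has $\beta_{\text{MDS}}(M)\le\sum_{j}\beta_{\text{MDS}}(M_j)$. *)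

(* Defs.v *)
From mathcomp Require Import all_boot all_order all_algebra.
Set Implicit Arguments. Unset Strict Implicit. Unset Printing Implicit Defensive.
Import Order.TTheory GRing.Theory Num.Theory.

(* An index coding instance with m users: user i : 'I_m has side information
   A i : {set 'I_m} (with i \notin A i, imposed in the theorem). *)

(* beta_MDS(M) = |M| - min_{i in M} |M ∩ A_i|   (min computed with default |M|,
   which is an upper bound of every term, so it is the true min for M nonempty) *)
Definition beta_mds (m : nat) (A : 'I_m -> {set 'I_m}) (M : {set 'I_m}) : nat :=
  #|M| - \big[minn/#|M|]_(i in M) #|M :&: A i|.

Definition minimal_partial_clique (m : nat) (A : 'I_m -> {set 'I_m})
  (M : {set 'I_m}) : Prop :=
  M != set0 /\
  forall P : {set {set 'I_m}}, partition P M ->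
    (beta_mds A M <= \sum_(B in P) beta_mds A B)%N.

Definition fpcc_feasible (R : realFieldType) (m : nat) (n : nat)
  (M : 'I_n -> {set 'I_m}) (gamma : 'I_n -> R) : Prop :=
  (forall j, M j != set0) /\
  (forall j, (0 <= gamma j <= 1)%R) /\
  (forall i : 'I_m, (1 <= \sum_(j < n | i \in M j) gamma j)%R).

Definition fpcc_cost (R : realFieldType) (m : nat) (A : 'I_m -> {set 'I_m})
  (n : nat) (M : 'I_n -> {set 'I_m}) (gamma : 'I_n -> R) : R :=
  (\sum_(j < n) gamma j * (beta_mds A (M j))%:R)%R.

(* Main.v *)
Require Import Defs.
From mathcomp Require Import all_boot all_order all_algebra.
From mathcomp Require Import ring lra.
Set Implicit Arguments. Unset Strict Implicit. Unset Printing Implicit Defensive.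
Import Order.TTheory GRing.Theory Num.Theory.

Section FM.
Variable R : realFieldType.
Local Open Scope ring_scope.
Definition cstr := (seq R * R)%type.
Definition lin k (a : seq R) (x : nat -> R) := \sum_(i < k) a`_i * x i.
Definition sat k (S : seq cstr) x := forall c, c \in S -> c.2 <= lin k c.1 x.

Lemma lin_ext k a x y : (forall i, (i < k)%N -> x i = y i) -> lin k a x = lin k a y.
Proof. by move=> h; apply: eq_bigr => i _; rewrite h. Qed.

Lemma sat_ext k S x y : (forall i, (i < k)%N -> x i = y i) -> sat k S x -> sat k S y.
Proof. by move=> h hs c /hs; rewrite (lin_ext _ h). Qed.

Definition upd (x : nat -> R) k z := fun i => if i == k then z else x i.

Lemma lin_upd k a x z : lin k.+1 a (upd x k z) = lin k a x + a`_k * z.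
Proof.
rewrite /lin big_ord_recr /= /upd eqxx; congr (_ + _).
by apply: eq_bigr => i _; rewrite (ltn_eqF (ltn_ord i)).
Qed.

Definition comb k (p n : cstr) : cstr :=
  (mkseq (fun i => p.1`_i * - n.1`_k + n.1`_i * p.1`_k) k,
   p.2 * - n.1`_k + n.2 * p.1`_k).

Lemma lin_comb k p n x :
  lin k (comb k p n).1 x = lin k p.1 x * - n.1`_k + lin k n.1 x * p.1`_k.
Proof.
rewrite /lin /= !mulr_suml -big_split /=; apply: eq_bigr => i _.
rewrite nth_mkseq //; ring.
Qed.

Definition elim k (S : seq cstr) :=
  [seq c <- S | c.1`_k == 0] ++
  [seq comb k p n | p <- [seq c <- S | 0 < c.1`_k], n <- [seq c <- S | c.1`_k < 0]].

Lemma elim_sound k S y z : sat k.+1 S (upd y k z) -> sat k (elim k S) y.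
Proof.
move=> hs c; rewrite mem_cat => /orP[|].
  rewrite mem_filter => /andP[/eqP h0 cS]; have := hs c cS.
  by rewrite lin_upd h0 mul0r addr0.
case/allpairsP => -[p n] /= [pP nN ->].
move: pP nN; rewrite !mem_filter => /andP[pk pS] /andP[nk nS].
have hp := hs p pS; have hn := hs n nS; rewrite lin_upd in hp; rewrite lin_upd in hn.
rewrite lin_comb /=.
have nk' : 0 < - n.1`_k by rewrite oppr_gt0.
have h1 := ler_wpM2r (ltW nk') hp.
have h2 := ler_wpM2r (ltW pk) hn.
nra.
Qed.

Lemma bigmax_ub (s : seq cstr) (P : pred cstr) (F : cstr -> R) d c :
  c \in s -> P c -> F c <= \big[Num.max/d]_(c <- s | P c) F c.
Proof.
elim: s => // a s IH; rewrite in_cons big_cons => /orP[/eqP <- Pc|cs Pc].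
  by rewrite Pc le_max lexx.
by case: (P a); rewrite ?le_max IH ?orbT.
Qed.

Lemma bigmax_d (s : seq cstr) (P : pred cstr) (F : cstr -> R) d :
  d <= \big[Num.max/d]_(c <- s | P c) F c.
Proof.
elim: s => [|a s IH]; rewrite ?big_nil // big_cons.
by case: (P a); rewrite ?le_max IH ?orbT.
Qed.

Lemma bigmax_lub (s : seq cstr) (P : pred cstr) (F : cstr -> R) d u :
  d <= u -> (forall c, c \in s -> P c -> F c <= u) ->
  \big[Num.max/d]_(c <- s | P c) F c <= u.
Proof.
move=> du; elim: s => [|a s IH] h; rewrite ?big_nil // big_cons.
have IH' : \big[Num.max/d]_(c <- s | P c) F c <= u.
  by apply: IH => c cs; apply: h; rewrite in_cons cs orbT.
case Pa: (P a) => //; rewrite ge_max IH' andbT; apply: h => //.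
by rewrite in_cons eqxx.
Qed.

Lemma bigmin_lb (s : seq cstr) (P : pred cstr) (F : cstr -> R) d c :
  c \in s -> P c -> \big[Num.min/d]_(c <- s | P c) F c <= F c.
Proof.
elim: s => // a s IH; rewrite in_cons big_cons => /orP[/eqP <- Pc|cs Pc].
  by rewrite Pc ge_min lexx.
by case: (P a); rewrite ?ge_min IH ?orbT.
Qed.

Lemma elim_complete k S y : sat k (elim k S) y -> exists z, sat k.+1 S (upd y k z).
Proof.
move=> hs.
pose L (c : cstr) := (c.2 - lin k c.1 y) / c.1`_k.
pose z := \big[Num.max/ \big[Num.min/0]_(n <- S | n.1`_k < 0) L n]_(p <- S | 0 < p.1`_k) L p.
have key : forall p n, p \in S -> n \in S -> 0 < p.1`_k -> n.1`_k < 0 -> L p <= L n.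
  move=> p n pS nS pk nk.
  have hc : (comb k p n) \in elim k S.
    by rewrite mem_cat; apply/orP; right; apply: allpairs_f; rewrite mem_filter ?pk ?nk.
  have := hs _ hc; rewrite lin_comb /= => hc'.
  have nk' : 0 < - n.1`_k by rewrite oppr_gt0.
  rewrite /L -(ler_pM2r (mulr_gt0 pk nk')).
  have e1 : (p.2 - lin k p.1 y) / p.1`_k * (p.1`_k * - n.1`_k) = (p.2 - lin k p.1 y) * - n.1`_k.
    by field; rewrite gt_eqF.
  have e2 : (n.2 - lin k n.1 y) / n.1`_k * (p.1`_k * - n.1`_k) = (lin k n.1 y - n.2) * p.1`_k.
    by field; rewrite lt_eqF.
  rewrite e1 e2; nra.
have zlb : forall p, p \in S -> 0 < p.1`_k -> L p <= z.
  by move=> p pS pk; apply: bigmax_ub.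
have zub : forall n, n \in S -> n.1`_k < 0 -> z <= L n.
  move=> n nS nk; apply: bigmax_lub; first by apply: bigmin_lb.
  by move=> p pS pk; apply: key.
exists z => c cS; rewrite lin_upd.
case: (ltrgtP c.1`_k 0) => hk.
- have := zub c cS hk; rewrite /L ler_ndivlMr // => h; lra.
- have := zlb c cS hk; rewrite /L ler_pdivrMr // => h; lra.
- have : c \in elim k S by rewrite mem_cat mem_filter hk eqxx cS.
  by move/hs; rewrite hk mul0r addr0.
Qed.

Fixpoint elimN n S := match n with 0 => S | n'.+1 => elimN n' (elim n'.+1 S) end.

Lemma elimN_spec n S y :
  sat 1 (elimN n S) y <-> exists x, sat n.+1 S x /\ x 0%N = y 0%N.
Proof.
elim: n S y => [|n IH] S y /=.
  split; first by move=> h; exists y.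
  by case=> x [hx e]; apply: sat_ext hx => -[|i] // _.
rewrite IH; split.
  case=> x [/elim_complete [z hz] e]; exists (upd x n.+1 z); split => //.
case=> x [hx e]; exists x; split => //; apply: (@elim_sound _ _ _ (x n.+1)).
by apply: sat_ext hx => i _; rewrite /upd; case: eqP => // ->.
Qed.

Lemma min1 S t0 b : sat 1 S (fun _ => t0) ->
  (forall t, sat 1 S (fun _ => t) -> b <= t) ->
  exists ts, sat 1 S (fun _ => ts) /\ forall t, sat 1 S (fun _ => t) -> ts <= t.
Proof.
move=> h0 hb.
have lin1 : forall a t, lin 1 a (fun _ => t) = a`_0 * t by move=> a t; rewrite /lin big_ord1.
pose ts := \big[Num.max/b]_(c <- S | 0 < c.1`_0) (c.2 / c.1`_0).
have lbt : forall t, sat 1 S (fun _ => t) -> ts <= t.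
  move=> t ht; apply: bigmax_lub; first exact: hb.
  by move=> c cS ck; have := ht c cS; rewrite lin1 ler_pdivrMr // mulrC.
exists ts; split => // c cS; rewrite lin1.
have := h0 c cS; rewrite lin1 => hc.
case: (ltrgtP c.1`_0 0) => hk.
- have := lbt _ h0 => h; nra.
- have := @bigmax_ub S (fun c => 0 < c.1`_0) (fun c => c.2 / c.1`_0) b c cS hk.
  by rewrite ler_pdivrMr // mulrC.
- by move: hc; rewrite hk !mul0r.
Qed.

Definition ext (x : nat -> R) t := fun i => if i is j.+1 then x j else t.

Lemma lin_ext_cons k a0 a x t : lin k.+1 (a0 :: a) (ext x t) = a0 * t + lin k a x.
Proof. by rewrite /lin big_ord_recl. Qed.

Lemma nth_opp (f : seq R) i : [seq - a | a <- f]`_i = - f`_i.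
Proof.
case: (ltnP i (size f)) => h; first by rewrite (nth_map 0).
by rewrite !nth_default ?size_map // oppr0.
Qed.

Lemma lin_opp k f x : lin k [seq - a | a <- f] x = - lin k f x.
Proof. by rewrite /lin -sumrN; apply: eq_bigr => i _; rewrite nth_opp mulNr. Qed.

Lemma lp_attain k S (f : seq R) x0 b : sat k S x0 ->
  (forall x, sat k S x -> b <= lin k f x) ->
  exists xs, sat k S xs /\ forall x, sat k S x -> lin k f xs <= lin k f x.
Proof.
move=> h0 hb.
pose Saug : seq cstr := (1 :: [seq - a | a <- f], 0) :: (-1 :: f, 0) ::
   [seq (0 :: c.1, c.2) | c <- S].
have sat_aug : forall x t, sat k.+1 Saug (ext x t) <-> sat k S x /\ t = lin k f x.
  move=> x t; split.
    move=> h; split.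
      move=> c cS; have := h (0 :: c.1, c.2).
      by rewrite lin_ext_cons mul0r add0r; apply; rewrite !in_cons map_f ?orbT.
    have := h _ (mem_head _ _); have := h (-1 :: f, 0); rewrite !lin_ext_cons lin_opp.
    by rewrite !in_cons eqxx orbT => /(_ isT) /= h1 h2; lra.
  case=> hx -> c; rewrite !in_cons => /orP[/eqP->|/orP[/eqP->|/mapP[c' c'S ->]]];
    rewrite lin_ext_cons ?lin_opp /=; try lra.
  by rewrite mul0r add0r; apply: hx.
have ext_eta : forall x', sat k.+1 Saug x' -> sat k.+1 Saug (ext (fun j => x' j.+1) (x' 0%N)).
  by move=> x'; apply: sat_ext => -[|i].
pose S1 := elimN k Saug.
have hS1 : forall t, sat 1 S1 (fun _ => t) <-> exists x, sat k S x /\ t = lin k f x.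
  move=> t; rewrite /S1 elimN_spec; split.
    case=> x' [/ext_eta/sat_aug [hx ht] e]; exists (fun j => x' j.+1); split => //.
    by rewrite -e.
  by case=> x [hx ->]; exists (ext x (lin k f x)); split => //; apply/sat_aug.
have [ts [hts tmin]] : exists ts, sat 1 S1 (fun _ => ts) /\ forall t, sat 1 S1 (fun _ => t) -> ts <= t.
  apply: (@min1 _ (lin k f x0) b); first by apply/hS1; exists x0.
  by move=> t /hS1 [x [hx ->]]; apply: hb.
have [xs [hxs e]] := (iffLR (hS1 ts)) hts.
exists xs; split => // x hx; rewrite -e; apply: tmin; apply/hS1; by exists x.
Qed.
End FM.

Section Comb.
Variable m : nat.
Variable A : 'I_m -> {set 'I_m}.
Local Notation beta := (beta_mds A).

Definition minb M := (M != set0) &&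
  [forall P : {set {set 'I_m}}, partition P M ==> (beta M <= \sum_(B in P) beta B)].

Lemma minbP M : reflect (minimal_partial_clique A M) (minb M).
Proof.
apply: (iffP andP) => [[h /forallP h2]|[h h2]]; split => //.
  by move=> P hP; exact: (implyP (h2 P) hP).
by apply/forallP => P; apply/implyP; exact: h2.
Qed.

Lemma part1 (M : {set 'I_m}) : M != set0 -> partition [set M] M.
Proof. by move=> h; rewrite /partition cover1 eqxx trivIset1 inE eq_sym h. Qed.

Lemma partitionU (Q P2 : {set {set 'I_m}}) B D2 :
  partition Q B -> partition P2 D2 -> [disjoint B & D2] -> partition (Q :|: P2) (B :|: D2).
Proof.
case/and3P => /eqP cQ tQ nQ; case/and3P => /eqP cP tP nP dis.
rewrite /partition /cover bigcup_setU -/(cover Q) -/(cover P2) cQ cP eqxx /=.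
by rewrite trivIsetU ?cQ ?cP // inE negb_or nQ nP.
Qed.

Lemma refine (P : {set {set 'I_m}}) (M B : {set 'I_m}) Q : partition P M -> B \in P -> partition Q B ->
  partition ((P :\ B) :|: Q) M.
Proof.
move=> hP hB hQ; have hD := partitionD1 hP hB; have sBM := partitionS hP hB.
have -> : M = B :|: (M :\: B).
  apply/setP => x; rewrite !inE; case: (boolP (x \in B)) => //= xB.
  by rewrite (subsetP sBM).
rewrite setUC; apply: partitionU => //.
by rewrite disjoints_subset setCD subsetUr.
Qed.

Lemma sumU_le (X Y : {set {set 'I_m}}) (F : {set 'I_m} -> nat) :
  \sum_(i in X :|: Y) F i <= \sum_(i in X) F i + \sum_(i in Y) F i.
Proof.
rewrite (@big_setID _ _ _ _ (X :|: Y) X) setUK setDUl setDv set0U leq_add2l.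
by rewrite [Z in _ <= Z](@big_setID _ _ _ _ Y X) leq_addl.
Qed.

Definition decomp (M : {set 'I_m}) := arg_min [set M] (fun P : {set {set 'I_m}} => partition P M)
   (fun P => \sum_(B in P) beta B).

Lemma decompP (M : {set 'I_m}) : M != set0 ->
  [/\ partition (decomp M) M, (forall B, B \in decomp M -> minb B) &
      \sum_(B in decomp M) beta B <= beta M].
Proof.
move=> M0; rewrite /decomp; case: arg_minnP => [|P hP hmin]; first exact: part1.
split => //.
  move=> B BP; apply/negPn/negP => nB.
  have B0 := partition_neq0 hP BP.
  move: nB; rewrite /minb B0 /= negb_forall => /existsP [Q].
  rewrite negb_imply -ltnNge => /andP[hQ lt].
  have := leq_trans (hmin _ (refine hP BP hQ)) (sumU_le _ _ _).
  rewrite (big_setD1 B BP) => h.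
  have {h} : beta B + \sum_(i in P :\ B) beta i <= \sum_(i in P :\ B) beta i + \sum_(i in Q) beta i := h.
  rewrite addnC leq_add2l => h.
  by have := leq_ltn_trans h lt; rewrite ltnn.
by have := hmin _ (part1 M0); rewrite big_set1.
Qed.
End Comb.

Section Main.
Variable R : realFieldType.
Variable m : nat.
Variable A : 'I_m -> {set 'I_m}.
Local Notation beta := (beta_mds A).
Local Open Scope ring_scope.

Definition Emin := [set S : {set 'I_m} | minb A S].
Definition eE : seq {set 'I_m} := enum Emin.
Definition K := size eE.
Definition nthS i : {set 'I_m} := nth set0 eE i.

Definition unitv i : seq R := mkseq (fun j => (j == i)%:R) K.
Definition covv (u : 'I_m) : seq R := [seq (u \in B)%:R | B : {set 'I_m} <- eE].
Definition fobj : seq R := [seq (beta B)%:R | B <- eE].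
Definition Ssys : seq (cstr R) :=
  [seq (unitv i, 0) | i <- iota 0 K] ++
  [seq ([seq - a | a <- unitv i], -1) | i <- iota 0 K] ++
  [seq (covv u, 1) | u <- enum 'I_m].

Lemma nthS_min i : (i < K)%N -> minb A (nthS i).
Proof. by move=> hi; have := mem_nth set0 hi; rewrite mem_enum inE. Qed.

Lemma sumK (F : {set 'I_m} -> R) : \sum_(j < K) F (nthS j) = \sum_(B in Emin) F B.
Proof. by rewrite -[RHS]big_enum -/eE (big_nth set0) big_mkord. Qed.

Lemma lin_unit i x : (i < K)%N -> lin K (unitv i) x = x i.
Proof.
move=> hi; rewrite /lin (bigD1 (Ordinal hi)) //= nth_mkseq // eqxx mul1r big1 ?addr0 //.
move=> j hj; rewrite nth_mkseq //; move: hj; rewrite -val_eqE /= => /negbTE ->.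
by rewrite mul0r.
Qed.

Lemma lin_cov u x : lin K (covv u) x = \sum_(j < K) (u \in nthS j)%:R * x j.
Proof. by apply: eq_bigr => j _; rewrite /covv (nth_map set0). Qed.

Lemma lin_f x : lin K fobj x = \sum_(j < K) (beta (nthS j))%:R * x j.
Proof. by apply: eq_bigr => j _; rewrite /fobj (nth_map set0). Qed.

Lemma sat_bounds x i : sat K Ssys x -> (i < K)%N -> 0 <= x i <= 1.
Proof.
move=> hs hi.
have h1 := hs (unitv i, 0); have h2 := hs ([seq - a | a <- unitv i], -1).
rewrite /= lin_opp lin_unit // in h2; rewrite /= lin_unit // in h1.
rewrite h1; last by rewrite mem_cat map_f // mem_iota.
have : -1 <= - x i by apply: h2; rewrite !mem_cat map_f ?orbT // mem_iota.
by rewrite lerN2.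
Qed.

Lemma sat_cov x u : sat K Ssys x -> 1 <= \sum_(j < K | u \in nthS j) x j.
Proof.
move=> hs; have h : 1 <= lin K (covv u) x.
  by apply: (hs (covv u, 1)); rewrite !mem_cat map_f ?orbT // mem_enum.
apply: le_trans h _; rewrite lin_cov [X in _ <= X]big_mkcond /=; apply: ler_sum => j _.
by case: (u \in nthS j); rewrite ?mul1r ?mul0r.
Qed.

Lemma dirA x : sat K Ssys x ->
  let M := fun j : 'I_K => nthS j in let g := fun j : 'I_K => x j in
  [/\ fpcc_feasible M g, (forall j, minimal_partial_clique A (M j)) &
      fpcc_cost A M g = lin K fobj x].
Proof.
move=> hs M g; split.
- split; first by move=> j; have /andP[] := nthS_min (ltn_ord j).
  split; first by move=> j; apply: sat_bounds.
  by move=> u; apply: sat_cov.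
- by move=> j; apply/minbP; apply: nthS_min.
- by rewrite lin_f /fpcc_cost; apply: eq_bigr => j _; rewrite mulrC.
Qed.

Lemma swap_sum n' (g' : 'I_n' -> R) (P : 'I_n' -> {set {set 'I_m}}) (c : {set 'I_m} -> R) :
  \sum_(B in Emin) c B * (\sum_(j < n') g' j * (B \in P j)%:R) =
  \sum_(j < n') g' j * \sum_(B in Emin) c B * (B \in P j)%:R.
Proof.
under eq_bigr do rewrite mulr_sumr.
rewrite exchange_big /=; apply: eq_bigr => j _; rewrite mulr_sumr.
by apply: eq_bigr => B _; rewrite mulrCA.
Qed.

Lemma dirB n' (M' : 'I_n' -> {set 'I_m}) (g' : 'I_n' -> R) : fpcc_feasible M' g' ->
  exists x, sat K Ssys x /\ lin K fobj x <= fpcc_cost A M' g'.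
Proof.
case=> [hne [hg hcov]].
pose P j := decomp A (M' j).
have hP j : [/\ partition (P j) (M' j), forall B, B \in P j -> minb A B &
    (\sum_(B in P j) beta B <= beta (M' j))%N] := decompP A (hne j).
have g0 j : 0 <= g' j by case/andP: (hg j).
pose y (B : {set 'I_m}) := \sum_(j < n') g' j * (B \in P j)%:R.
have y0 B : 0 <= y B by apply: sumr_ge0 => j _; apply: mulr_ge0; rewrite ?ler0n.
pose X B := Num.min (y B) 1.
have X01 B : 0 <= X B <= 1 by rewrite le_min y0 ler01 ge_min lexx orbT.
have XY B : X B <= y B by rewrite ge_min lexx.
have PE j B : B \in P j -> B \in Emin by move=> BP; rewrite inE; case: (hP j) => _ h _; apply: h.
exists (fun i => X (nthS i)); split.
- move=> c; rewrite !mem_cat => /orP[/mapP[i hi ->]|/orP[/mapP[i hi ->]|/mapP[u _ ->]]] /=.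
  + rewrite mem_iota add0n in hi; case/andP: hi => _ hi.
    by rewrite lin_unit //; case/andP: (X01 (nthS i)).
  + rewrite mem_iota add0n in hi; case/andP: hi => _ hi.
    by rewrite lin_opp lin_unit // lerN2; case/andP: (X01 (nthS i)).
  + rewrite lin_cov (sumK (fun B => (u \in B)%:R * X B)).
    case: (boolP [exists B, [&& B \in Emin, u \in B & 1 <= y B]]).
      case/existsP => B /and3P[BE uB yB]; rewrite (bigD1 B) //= uB mul1r /X (min_r yB).
      rewrite lerDl; apply: sumr_ge0 => C _; apply: mulr_ge0; rewrite ?ler0n //.
      by case/andP: (X01 C).
    move/existsPn => hno.
    have -> : \sum_(B in Emin) (u \in B)%:R * X B = \sum_(B in Emin) (u \in B)%:R * y B.
      apply: eq_bigr => B BE; case uB: (u \in B); rewrite ?mul0r // !mul1r /X min_l //.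
      by have := hno B; rewrite BE uB /= -ltNge => /ltW.
    rewrite swap_sum; apply: le_trans (hcov u) _.
    rewrite big_mkcond /=; apply: ler_sum => j _.
    have inn0 : (0 : R) <= \sum_(B in Emin) (u \in B)%:R * (B \in P j)%:R.
      by apply: sumr_ge0 => C _; apply: mulr_ge0; rewrite ?ler0n.
    case: ifP => uM; last by apply: mulr_ge0.
    case: (hP j) => hPj _ _.
    have uc : u \in cover (P j) by rewrite (cover_partition hPj).
    have [B0 B0P uB0] : exists2 B0, B0 \in P j & u \in B0.
      by exists (pblock (P j) u); [apply: pblock_mem | rewrite mem_pblock].
    have inn1 : (1 : R) <= \sum_(B in Emin) (u \in B)%:R * (B \in P j)%:R.
      have h1 : (1:R) <= (u \in B0)%:R * (B0 \in P j)%:R by rewrite uB0 B0P mulr1.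
      rewrite (bigD1 B0 (PE _ _ B0P)) /=; apply: (le_trans h1); rewrite lerDl.
      by apply: sumr_ge0 => C _; apply: mulr_ge0; rewrite ?ler0n.
    by rewrite -{1}[g' j]mulr1; apply: ler_wpM2l.
- rewrite lin_f (sumK (fun B => (beta B)%:R * X B)).
  apply: le_trans (_ : _ <= \sum_(B in Emin) (beta B)%:R * y B) _.
    by apply: ler_sum => B _; apply: ler_wpM2l; rewrite ?ler0n.
  rewrite swap_sum /fpcc_cost; apply: ler_sum => j _; apply: ler_wpM2l => //.
  have -> : \sum_(B in Emin) (beta B)%:R * (B \in P j)%:R = \sum_(B in P j) (beta B)%:R :> R.
    rewrite (eq_bigr (fun B => if B \in P j then (beta B)%:R else 0)); last first.
      by move=> B _; case: (B \in P j); rewrite ?mulr1 ?mulr0.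
    rewrite -big_mkcondr; apply: eq_bigl => B.
    by case BP: (B \in P j); rewrite ?andbF ?andbT // (PE j B BP).
  rewrite -natr_sum ler_nat; by case: (hP j).
Qed.

End Main.

Theorem proposition16 (R : realFieldType) (m : nat) (A : 'I_m -> {set 'I_m})
  (hA : forall i : 'I_m, i \notin A i) :
  exists (n : nat) (M : 'I_n -> {set 'I_m}) (gamma : 'I_n -> R),
    [/\ fpcc_feasible M gamma,
        (forall j, minimal_partial_clique A (M j)) &
        forall (n' : nat) (M' : 'I_n' -> {set 'I_m}) (gamma' : 'I_n' -> R),
          fpcc_feasible M' gamma' ->
          (fpcc_cost A M gamma <= fpcc_cost A M' gamma')%R].
Proof.
have fs : fpcc_feasible (fun j : 'I_m => [set j]) (fun _ => 1%R : R).
  split; first by move=> j; apply/set0Pn; exists j; rewrite inE.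
  split; first by move=> _; rewrite ler01 lexx.
  by move=> i; rewrite (big_pred1 i) // => j; rewrite inE eq_sym.
have [x0 [hx0 _]] := dirB A fs.
have hb : forall x, sat (K A) (Ssys R A) x -> (0%R <= lin (K A) (fobj R A) x)%R.
  move=> x hx; rewrite lin_f; apply: sumr_ge0 => j _; apply: mulr_ge0; rewrite ?ler0n //.
  by case/andP: (sat_bounds hx (ltn_ord j)).
have [xs [hxs hmin]] := lp_attain hx0 hb.
case: (dirA hxs) => hfeas hminimal hcost.
exists (K A), (fun j => nthS A j), (fun j => xs j); split => //.
move=> n' M' g' hf; rewrite hcost; have [x [hx hle]] := dirB A hf.
by apply: le_trans hle; exact: hmin.
Qed.
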